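(* Let $n\ge3$, $K,H\le\mathbb{H}^\times$ finite with $[K,K]\le H\trianglelefteq K$, $H\ne\{1\}$ and $K/H$ cyclic. Let $\lambda=(\lambda_1,\dots,\lambda_k)$ be a partition of $n$, $\alpha,\beta\in K$, and $d=\gcd([K:H],\lambda_1,\dots,\lambda_k)$. Then $P_\lambda^\alpha$ and $P_\lambda^\beta$ are conjugate in $G_n(K,H)$ if and only if the order of $\alpha\beta^{-1}H$ in $K/H$ divides $[K:H]/d$.
   Context: $\mathbb{H}$: quaternions. $A_n(K,H)$: diagonal matrices $\mathrm{diag}(k_1,\dots,k_n)$, $k_i\in K$, $k_1\cdots k_n\in H$; $G_n(K,H)$: group generated by $A_n(K,H)$ and the permutation matrices $M(\sigma)$, acting on $\mathbb{H}^n$ by left multiplication. For a partition $\lambda=(\lambda_1,\dots,\lambda_k)$ of $n$ with partial sums $m_i=\lambda_1+\dots+\lambda_i$, $m_0=0$, let $I_i=\{m_{i-1}+1,\dots,m_i\}$; for $\alpha\in K$ let $D_\alpha=\mathrm{diag}(\alpha,1,\dots,1)$. Then $P_\lambda^\alpha=P_1\times\dots\times P_k$ with $P_i=\{D_\alpha M(\sigma)D_\alpha^{-1}:\sigma\in\mathrm{Sym}(I_i)\}$ (the symmetric groups permuting the vectors $\alpha e_1, e_2,\dots,e_{m_1}$, resp. $e_{m_{i-1}+1},\dots,e_{m_i}$). *)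

(* Defs.v *)
From HB Require Import structures.
From mathcomp Require Import all_boot all_order all_algebra all_fingroup all_solvable.
From mathcomp Require Import ring.
From mathcomp Require Import reals.

Set Implicit Arguments.
Unset Strict Implicit.
Unset Printing Implicit Defensive.
Import GRing.Theory.
Local Open Scope ring_scope.

Section Quaternions.
Variable R : comNzRingType.

Record quat := Quat { q0 : R; q1 : R; q2 : R; q3 : R }.

Definition quat_to (x : quat) := (q0 x, q1 x, q2 x, q3 x).
Definition quat_of (t : R * R * R * R) := let: (a, b, c, d) := t in Quat a b c d.
Lemma quat_toK : cancel quat_to quat_of. Proof. by case. Qed.

HB.instance Definition _ := Choice.copy quat (can_type quat_toK).

Definition qzero := Quat 0 0 0 0.
Definition qone := Quat 1 0 0 0.
Definition qopp (x : quat) := Quat (- q0 x) (- q1 x) (- q2 x) (- q3 x).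
Definition qadd (x y : quat) :=
  Quat (q0 x + q0 y) (q1 x + q1 y) (q2 x + q2 y) (q3 x + q3 y).
(* Hamilton product: i^2 = j^2 = k^2 = ijk = -1 *)
Definition qmul (x y : quat) :=
  Quat (q0 x * q0 y - q1 x * q1 y - q2 x * q2 y - q3 x * q3 y)
       (q0 x * q1 y + q1 x * q0 y + q2 x * q3 y - q3 x * q2 y)
       (q0 x * q2 y - q1 x * q3 y + q2 x * q0 y + q3 x * q1 y)
       (q0 x * q3 y + q1 x * q2 y - q2 x * q1 y + q3 x * q0 y).

Lemma qaddA : associative qadd.
Proof. by move=> [? ? ? ?] [? ? ? ?] [? ? ? ?]; congr Quat => /=; ring. Qed.
Lemma qaddC : commutative qadd.
Proof. by move=> [? ? ? ?] [? ? ? ?]; congr Quat => /=; ring. Qed.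
Lemma qadd0 : left_id qzero qadd.
Proof. by move=> [? ? ? ?]; congr Quat => /=; ring. Qed.
Lemma qaddN : left_inverse qzero qopp qadd.
Proof. by move=> [? ? ? ?]; congr Quat => /=; ring. Qed.
Lemma qmulA : associative qmul.
Proof. by move=> [? ? ? ?] [? ? ? ?] [? ? ? ?]; congr Quat => /=; ring. Qed.
Lemma qmul1 : left_id qone qmul.
Proof. by move=> [? ? ? ?]; congr Quat => /=; ring. Qed.
Lemma qmulr1 : right_id qone qmul.
Proof. by move=> [? ? ? ?]; congr Quat => /=; ring. Qed.
Lemma qmulDl : left_distributive qmul qadd.
Proof. by move=> [? ? ? ?] [? ? ? ?] [? ? ? ?]; congr Quat => /=; ring. Qed.
Lemma qmulDr : right_distributive qmul qadd.
Proof. by move=> [? ? ? ?] [? ? ? ?] [? ? ? ?]; congr Quat => /=; ring. Qed.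
Lemma qone_neq0 : qone != qzero.
Proof. by apply/eqP => -[] /eqP; rewrite oner_eq0. Qed.

HB.instance Definition _ := GRing.isNzRing.Build quat
  qaddA qaddC qadd0 qaddN qmulA qmul1 qmulr1 qmulDl qmulDr qone_neq0.

End Quaternions.

Definition HH (R : realType) : nzRingType := quat R.

Definition qdiag (R : realType) n (x : 'I_n -> HH R) : 'M[HH R]_n :=
  \matrix_(i, j) (if i == j then x i else 0).

Definition Mperm (R : realType) n (s : 'S_n) : 'M[HH R]_n := perm_mx s.

Inductive gen_group (R : realType) n (S : 'M[HH R]_n -> Prop) : 'M[HH R]_n -> Prop :=
| gen_one : gen_group S 1%:M
| gen_gen A : S A -> gen_group S A
| gen_mul A B : gen_group S A -> gen_group S B -> gen_group S (A *m B)
| gen_inv A B : gen_group S A -> A *m B = 1%:M -> B *m A = 1%:M -> gen_group S B.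

(* Finite subgroups K of HH^x are given as images of a finite group gT under
   an injective group homomorphism f : gT -> HH^x. *)
Definition quat_embedding (R : realType) (gT : finGroupType) (f : gT -> HH R) :=
  [/\ injective f, f 1%g = 1 & forall x y, f (x * y)%g = f x * f y].

Definition A_n (R : realType) (gT : finGroupType) (f : gT -> HH R)
    (K H : {set gT}) n (A : 'M[HH R]_n) : Prop :=
  exists k : 'I_n -> gT,
    [/\ forall i, k i \in K, (\prod_(i < n) k i)%g \in H & A = qdiag (fun i => f (k i))].

Definition G_n (R : realType) (gT : finGroupType) (f : gT -> HH R)
    (K H : {set gT}) n : 'M[HH R]_n -> Prop :=
  gen_group (fun A => A_n f K H A \/ exists s : 'S_n, A = Mperm R s).

Definition is_partition (n : nat) (lam : seq nat) : Prop :=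
  [/\ all (fun l => 0 < l)%N lam, sorted geq lam & sumn lam = n].

(* the block I_i = {m_{i-1}+1, ..., m_i} (1-based); with 0-based indices j : 'I_n
   this is  m_{i-1} <= j < m_i  where m_i = lam_1 + ... + lam_i. *)
Definition in_block (lam : seq nat) (i : nat) (j : nat) : bool :=
  (sumn (take i lam) <= j < sumn (take i.+1 lam))%N.

Definition perm_in_block n (lam : seq nat) (i : nat) (s : 'S_n) : bool :=
  [forall j : 'I_n, ~~ in_block lam i j ==> (s j == j)].

Definition D_ (R : realType) n (a : HH R) : 'M[HH R]_n :=
  qdiag (fun i : 'I_n => if nat_of_ord i == 0%N then a else 1).

Definition P_lam (R : realType) (gT : finGroupType) (f : gT -> HH R)
    n (lam : seq nat) (alpha : gT) : 'M[HH R]_n -> Prop :=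
  fun A => exists s : 'I_(size lam) -> 'S_n,
    (forall i : 'I_(size lam), perm_in_block lam i (s i)) /\
    A = \big[mulmx/1%:M]_(i < size lam)
          (D_ n (f alpha) *m Mperm R (s i) *m D_ n (f (alpha^-1)%g)).

Definition conjugate_in (R : realType) n (G P Q : 'M[HH R]_n -> Prop) : Prop :=
  exists g gi : 'M[HH R]_n,
    [/\ G g, g *m gi = 1%:M, gi *m g = 1%:M &
        forall A, Q A <-> exists B, P B /\ A = g *m B *m gi].

(* Main.v *)
Require Import Defs.
From HB Require Import structures.
From mathcomp Require Import all_boot all_order all_algebra all_fingroup all_solvable.
From mathcomp Require Import reals.
From mathcomp Require Import zify.

Module s1.
Set Implicit Arguments. Unset Strict Implicit. Unset Printing Implicit Defensive.
Import GRing.Theory.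

Section Mono.
Variables (R : realType) (n : nat).
Local Open Scope ring_scope.
Definition mono (x : 'I_n -> HH R) (s : 'S_n) : 'M[HH R]_n :=
  \matrix_(i, j) (if s i == j then x i else 0).

Lemma mono_mul x y s t : mono x s *m mono y t = mono (fun i => x i * y (s i)) (s * t)%g.
Proof.
apply/matrixP=> i j; rewrite !mxE (bigD1 (s i)) //= big1 => [|k /negbTE kn].
  by rewrite !mxE eqxx permM; case: eqP => _; rewrite ?mulr0 addr0.
by rewrite !mxE eq_sym kn mul0r.
Qed.

Lemma qdiag_mono x : qdiag x = mono x 1%g.
Proof. by apply/matrixP=> i j; rewrite !mxE perm1. Qed.

Lemma Mperm_mono s : Mperm R s = mono (fun _ => 1) s.
Proof. by apply/matrixP=> i j; rewrite /Mperm /perm_mx !mxE; case: eqP. Qed.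

Lemma mono1 : mono (fun _ => 1) 1%g = 1%:M.
Proof. by apply/matrixP=> i j; rewrite !mxE perm1; case: eqP. Qed.

Lemma mono_inj x y s t : (forall i, x i != 0) -> mono x s = mono y t ->
  s = t /\ (forall i, x i = y i).
Proof.
move=> nz /matrixP E.
have st : forall i, s i = t i.
  move=> i; have := E i (s i); rewrite !mxE eqxx.
  by case: eqP => // _ h; move: (nz i); rewrite h eqxx.
split; first by apply/permP.
by move=> i; have := E i (s i); rewrite !mxE eqxx st eqxx.
Qed.
End Mono.
Lemma mono_ext (R : realType) n (x y : 'I_n -> HH R) s :
  (forall i, x i = y i) -> mono x s = mono y s.
Proof. by move=> h; apply/matrixP=> i j; rewrite !mxE h. Qed.

End s1.
Import s1.

Module s2.
Set Implicit Arguments. Unset Strict Implicit. Unset Printing Implicit Defensive.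
Import GRing.Theory.
Local Open Scope ring_scope.

Lemma telescope (R : realType) n N (D D' : 'M[HH R]_n) (X : 'I_N -> 'M[HH R]_n) :
  D *m D' = 1%:M -> D' *m D = 1%:M ->
  \big[mulmx/1%:M]_(i < N) (D *m X i *m D') = D *m (\big[mulmx/1%:M]_(i < N) X i) *m D'.
Proof.
move=> h1 h2; elim: N X => [|N IH] X; first by rewrite !big_ord0 mulmx1.
rewrite !big_ord_recl /= IH !mulmxA.
by rewrite -(mulmxA _ D' D) h2 mulmx1.
Qed.

Lemma permmx_big (R : realType) n N (s : 'I_N -> 'S_n) :
  \big[mulmx/1%:M]_(i < N) Mperm R (s i) = Mperm R (\prod_(i < N) s i)%g.
Proof.
elim: N s => [|N IH] s; first by rewrite !big_ord0 /Mperm perm_mx1.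
by rewrite !big_ord_recl /= IH /Mperm perm_mxM.
Qed.

Section Grp.
Variables (R : realType) (gT : finGroupType) (f : gT -> HH R).
Hypothesis emb : quat_embedding f.
Variable n : nat.
Local Open Scope ring_scope.

Definition monoG (x : 'I_n -> gT) s := mono (fun i => f (x i)) s.

Lemma fM x y : f (x * y)%g = f x * f y. Proof. by case: emb. Qed.
Lemma f1 : f 1%g = 1. Proof. by case: emb. Qed.
Lemma finj : injective f. Proof. by case: emb. Qed.
Lemma fnz x : f x != 0.
Proof.
apply/eqP=> h; have := f1; rewrite -(mulgV x) fM h mul0r => /eqP.
by rewrite eq_sym oner_eq0.
Qed.

Lemma monoG_mul x y s t :
  monoG x s *m monoG y t = monoG (fun i => x i * y (s i))%g (s * t)%g.
Proof. by rewrite /monoG mono_mul; apply: mono_ext => i; rewrite fM. Qed.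

Lemma monoG_inj x y s t : monoG x s = monoG y t -> s = t /\ (forall i, x i = y i).
Proof.
move=> /mono_inj [] // => [i|-> h]; first exact: fnz.
by split=> // i; apply: finj; apply: h.
Qed.

Definition dl (a : gT) (i : 'I_n) : gT := if nat_of_ord i == 0%N then a else 1%g.

Lemma D_mono a : D_ n (f a) = monoG (dl a) 1%g.
Proof.
rewrite /D_ qdiag_mono /monoG; apply: mono_ext => i.
by rewrite /dl; case: eqP; rewrite ?f1.
Qed.

Lemma Mperm_monoG s : Mperm R s = monoG (fun _ => 1%g) s.
Proof. by rewrite Mperm_mono /monoG f1. Qed.

Lemma one_monoG : 1%:M = monoG (fun _ => 1%g) 1%g.
Proof. by rewrite /monoG f1 mono1. Qed.

Lemma qdiag_monoG k : qdiag (fun i => f (k i)) = monoG k 1%g.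
Proof. by rewrite qdiag_mono. Qed.
Lemma monoG_ext x y s t : (forall i, x i = y i) -> s = t -> monoG x s = monoG y t.
Proof. by move=> h ->; apply: mono_ext => i; rewrite h. Qed.
End Grp.

End s2.
Import s2.

Module s4.
Set Implicit Arguments. Unset Strict Implicit. Unset Printing Implicit Defensive.

Fixpoint blk (lam : seq nat) (l : nat) : nat :=
  match lam with [::] => 0 | a :: r => if l < a then 0 else (blk r (l - a)).+1 end.

Lemma in_block0 a r l : in_block (a :: r) 0 l = (l < a).
Proof. rewrite /in_block /= take0 /=. lia. Qed.

Lemma in_blockS a r i l : in_block (a :: r) i.+1 l = (a <= l) && in_block r i (l - a).
Proof.
rewrite /in_block /=; set u := sumn _; set v := sumn _.
lia.
Qed.

Lemma blk_in lam i l : in_block lam i l -> blk lam l = i.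
Proof.
elim: lam i l => [|a r IH] i l; first by rewrite /in_block /=; lia.
case: i => [|i]; first by rewrite in_block0 /= => ->.
by rewrite in_blockS /= => /andP [h1 /IH ->]; rewrite ltnNge h1.
Qed.

Lemma in_block_lt lam i l : in_block lam i l -> i < size lam.
Proof.
elim: lam i l => [|a r IH] i l; first by rewrite /in_block /=; lia.
case: i => [|i] //; rewrite in_blockS => /andP [_ /IH] /=; lia.
Qed.

Lemma in_blk lam l : l < sumn lam -> in_block lam (blk lam l) l.
Proof.
elim: lam l => [|a r IH] l //= hl.
case: ifP => h; first by rewrite in_block0.
rewrite in_blockS; apply/andP; split; first lia.
by apply: IH; lia.
Qed.

Lemma sum_blk lam (F : nat -> nat) :
  \sum_(0 <= l < sumn lam) F (blk lam l) = \sum_(0 <= i < size lam) nth 0 lam i * F i.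
Proof.
elim: lam F => [|a r IH] F; first by rewrite !big_geq.
rewrite /= (big_cat_nat _ (n := a)) //=; last lia.
rewrite big_nat_recl // -IH.
rewrite (eq_big_nat _ _ (F2 := fun _ => F 0)); last by move=> l /andP [_ ->].
rewrite sum_nat_const_nat subn0; congr addn.
rewrite -{1}(add0n a) big_addn addnC addnK; apply: eq_big_nat => l _.
by rewrite ltnNge leq_addl /= addnK.
Qed.

Lemma foldr_dvd_m m lam : foldr gcdn m lam %| m.
Proof. by elim: lam => //= a r IH; apply: dvdn_trans IH; apply: dvdn_gcdr. Qed.

Lemma foldr_dvd_nth m lam i : foldr gcdn m lam %| nth 0 lam i.
Proof.
elim: lam i => [|a r IH] [|i] //=; first exact: dvdn_gcdl.
by apply: dvdn_trans (IH i); apply: dvdn_gcdr.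
Qed.

Lemma rep m lam : 0 < m -> all (fun l => 0 < l) lam -> forall s,
  foldr gcdn m lam %| s ->
  exists e : nat -> nat, \sum_(0 <= i < size lam) nth 0 lam i * e i = s %[mod m].
Proof.
move=> m0; elim: lam => [|a r IH] /=.
  by move=> _ s /eqP hs; exists (fun _ => 0); rewrite big_geq // mod0n hs.
move=> /andP [a0 rpos] s.
set g' := foldr gcdn m r => hs.
case: (Bezoutl g' a0) => b _ /dvdnP [c' hc'].
case/dvdnP: hs => q hq.
have /dvdnP [w hw] := foldr_dvd_m m r; rewrite -/g' in hw.
have w0 : 0 < w by move: m0; rewrite hw muln_gt0 => /andP [].
have [e' he'] := IH rpos (g' * (b * q * w.-1)) (dvdn_mulr _ (dvdnn _)).
exists (fun i => if i is i'.+1 then e' i' else c' * q).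
rewrite big_nat_recl //= -modnDmr he' modnDmr.
have -> : a * (c' * q) + g' * (b * q * w.-1) = s + b * q * m.
  rewrite hq hw; clear hw he'; move: hc' w0; set G := gcdn a g'.
  case: w => // w' hc' _ /=; nia.
by rewrite addnC modnMDl.
Qed.

End s4.
Import s4.

Module s6.
Set Implicit Arguments. Unset Strict Implicit. Unset Printing Implicit Defensive.
Local Open Scope group_scope.

Lemma prod_one (gT : finGroupType) N (i0 : 'I_N) (t : gT) :
  \prod_(i < N) (if i == i0 then t else 1) = t.
Proof. by rewrite -big_mkcond big_pred1_eq. Qed.

Section Quot.
Variables (gT : finGroupType) (K H : {group gT}) (gam : coset_of H).
Hypotheses (nHK : K \subset 'N(H)) (Kgam : K / H = <[gam]>).
Let m := #[gam].

Lemma exE x : exists e, (x \in K) ==> (coset H x == gam ^+ e).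
Proof.
case: (boolP (x \in K)) => xK; last by exists 0.
have : coset H x \in <[gam]> by rewrite -Kgam mem_quotient.
by case/cycleP=> e ->; exists e; rewrite eqxx.
Qed.

Definition E x := ex_minn (exE x).

Lemma E_spec x : x \in K -> coset H x = gam ^+ E x.
Proof. by rewrite /E; case: ex_minnP => e /implyP h _ /h /eqP. Qed.

Lemma E1 : E 1 = 0.
Proof.
rewrite /E; case: ex_minnP => e _ /(_ 0); rewrite expg0 morph1 eqxx implybT.
by move=> /(_ isT); rewrite leqn0 => /eqP.
Qed.

Lemma cos_prod N (k : 'I_N -> gT) : (forall i, k i \in K) ->
  coset H (\prod_(i < N) k i) = gam ^+ (\sum_(i < N) E (k i)).
Proof.
move=> kK; rewrite morph_prod => [|i _]; last exact: (subsetP nHK).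
elim: N k kK => [|N IH] k kK; first by rewrite !big_ord0.
rewrite !big_ord_recl IH // expgD; congr (_ * _); exact: E_spec.
Qed.

Lemma prod_inH N (k : 'I_N -> gT) : (forall i, k i \in K) ->
  (\prod_(i < N) k i \in H) = (m %| \sum_(i < N) E (k i)).
Proof.
move=> kK; rewrite order_dvdn -cos_prod //.
have pK : \prod_(i < N) k i \in K by apply: group_prod.
apply/idP/eqP; first exact: coset_id.
by apply: coset_idr; apply: (subsetP nHK).
Qed.

Lemma E_mul x y : x \in K -> y \in K -> E (x * y) = E x + E y %[mod m].
Proof.
move=> xK yK; apply/eqP; rewrite -eq_expg_mod_order expgD -!E_spec ?groupM //.
by rewrite morphM // (subsetP nHK).
Qed.

Lemma E_inv x : x \in K -> E x^-1 + E x = 0 %[mod m].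
Proof. by move=> xK; rewrite -E_mul ?groupV // mulVg E1. Qed.

Lemma E_pow x e : x \in K -> coset H x = gam -> E (x ^+ e) = e %[mod m].
Proof.
move=> xK hx; apply/eqP; rewrite -eq_expg_mod_order -E_spec ?groupX //.
rewrite morphX ?(subsetP nHK) //; change (coset H x ^+ e == gam ^+ e); by rewrite hx.
Qed.

Lemma sum_cong N (F G : 'I_N -> nat) : (forall i, F i = G i %[mod m]) ->
  \sum_(i < N) F i = \sum_(i < N) G i %[mod m].
Proof. by move=> h; rewrite -[LHS]modn_summ -[RHS]modn_summ; congr (_ %% _); apply: eq_bigr => i _; exact: h. Qed.

Lemma m_gt0 : 0 < m. Proof. exact: order_gt0. Qed.
End Quot.

End s6.
Import s6.

Module s7.
Set Implicit Arguments. Unset Strict Implicit. Unset Printing Implicit Defensive.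
Local Open Scope group_scope.

Section GG.
Variables (R : realType) (gT : finGroupType) (f : gT -> HH R).
Hypothesis emb : quat_embedding f.
Variables (K H : {group gT}) (gam : coset_of H).
Hypotheses (nHK : K \subset 'N(H)) (Kgam : K / H = <[gam]>).
Let m := #[gam].
Let E := E Kgam.
Variable n : nat.

Definition Gm (g : 'M[HH R]_n) := exists k s,
  [/\ forall i, k i \in K, (m %| \sum_(i < n) E (k i))%N & g = monoG f k s].

Lemma dvd_cong a b : a = b %[mod m] -> (m %| a) = (m %| b).
Proof. by move=> h; rewrite /dvdn h. Qed.

Lemma sum_perm (F : 'I_n -> nat) (s : 'S_n) : \sum_(i < n) F (s i) = \sum_(i < n) F i.
Proof. by rewrite [RHS](reindex_inj (@perm_inj _ s)). Qed.

Lemma G_Gm g : G_n f K H g -> Gm g.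
Proof.
elim=> {g} [|A [[k [kK kH ->]] | [s ->]] | A B _ [k [s [kK km ->]]] _ [l [t [lK lm ->]]]
           | A B _ [k [s [kK km ->]]] hAB hBA].
- exists (fun _ => 1), 1; split; try by move=> i; rewrite group1.
    by rewrite /E (E1 Kgam) big1 ?dvdn0.
  by rewrite (one_monoG emb).
- exists k, 1; split=> //; first by rewrite -(prod_inH nHK Kgam).
  by rewrite qdiag_monoG.
- exists (fun _ => 1), s; split; try by move=> i; rewrite group1.
    by rewrite /E (E1 Kgam) big1 ?dvdn0.
  by rewrite (Mperm_monoG emb).
- exists (fun i => k i * l (s i)), (s * t); split.
  + by move=> i; rewrite groupM.
  + rewrite (dvd_cong (sum_cong (fun i => E_mul nHK Kgam (kK i) (lK (s i))))).
    by rewrite big_split /= (sum_perm (fun i => s6.E Kgam (l i)) s) dvdn_add.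
  + by rewrite (monoG_mul emb).
- set k' := fun i => (k (s^-1 i))^-1.
  have h1 : (monoG f k s *m monoG f k' s^-1 = 1%:M)%R.
    rewrite (monoG_mul emb) (one_monoG emb); apply: monoG_ext; last by rewrite mulgV.
    by move=> i; rewrite /k' permK mulgV.
  have -> : B = monoG f k' s^-1.
    by rewrite -[B]mulmx1 -h1 mulmxA hBA mul1mx.
  exists k', s^-1; split=> //.
    by move=> i; rewrite groupV.
  have := sum_cong (fun i => E_inv nHK Kgam (kK i)).
  move/dvd_cong; rewrite big_split /= big1_eq dvdn0 dvdn_addl // => h.
  rewrite /k' (sum_perm (fun i => s6.E Kgam (k i)^-1) s^-1). exact: h.
Qed.
End GG.

End s7.
Import s7.

Module s8.
Set Implicit Arguments. Unset Strict Implicit. Unset Printing Implicit Defensive.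
Local Open Scope group_scope.

Lemma grp1 (gT : finGroupType) (x a a' y c c' : gT) :
  x * a * 1 * a'^-1 * y^-1 = c * 1 * c'^-1 -> c^-1 * x * a = c'^-1 * y * a'.
Proof.
rewrite !mulg1 => h.
have h2 : x * a = c * c'^-1 * y * a'.
  by rewrite -h mulgKV mulgKV.
by rewrite -mulgA h2 !mulgA mulVg mul1g.
Qed.
Lemma grp2 (gT : finGroupType) (b c a a2 b2 : gT) :
  b * c * a^-1 * a * 1 * a2^-1 * (b2 * c * a2^-1)^-1 = b * 1 * b2^-1.
Proof. by rewrite !invMg !invgK !mulg1 mulgKV !mulgA mulgKV mulgK. Qed.

Lemma block_sum m n lam (U : 'I_n -> nat) : sumn lam = n ->
  (forall i0 (j j' : 'I_n), in_block lam i0 j -> in_block lam i0 j' -> U j = U j') ->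
  foldr gcdn m lam %| \sum_(j < n) U j.
Proof.
case: n U => [|n'] U hn hU; first by rewrite big_ord0 dvdn0.
pose F i := U (inord (sumn (take i lam))).
have -> : \sum_(j < n'.+1) U j = \sum_(j < n'.+1) F (blk lam j).
  apply: eq_bigr => j _; rewrite /F.
  have hj : in_block lam (blk lam j) j by apply: in_blk; rewrite hn.
  have hs : in_block lam (blk lam j) (inord (sumn (take (blk lam j) lam)) : 'I_n'.+1).
    move: hj; rewrite /in_block => /andP [h1 h2].
    rewrite inordK ?leqnn /=; first by apply: leq_ltn_trans h1 h2.
    by apply: leq_ltn_trans h1 (ltn_ord j).
  exact: hU hj hs.
rewrite -(big_mkord xpredT (fun j => F (blk lam j))) -hn sum_blk.
by apply: dvdn_sum => i _; apply: dvdn_mulr; apply: foldr_dvd_nth.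
Qed.

Lemma blk_perm n lam i0 (s : 'S_n) (j : 'I_n) :
  perm_in_block lam i0 s -> blk lam (s j) = blk lam j.
Proof.
move=> /forallP h.
case: (boolP (in_block lam i0 j)) => hj; last by move: (h j); rewrite hj => /eqP ->.
have hsj : in_block lam i0 (s j).
  apply: contraT => hn; move: (h (s j)); rewrite hn /= => /eqP /perm_inj hh.
  by move: hn; rewrite hh hj.
by rewrite (blk_in hj) (blk_in hsj).
Qed.

Lemma modD_cong a a' b b' m : a = a' %[mod m] -> b = b' %[mod m] -> a + b = a' + b' %[mod m].
Proof. by move=> h1 h2; rewrite -modnDm h1 h2 modnDm. Qed.

Lemma sum_blk_ord n lam (F : nat -> nat) : sumn lam = n ->
  \sum_(j < n) F (blk lam j) = \sum_(0 <= i < size lam) nth 0 lam i * F i.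
Proof. move=> <-; rewrite -(big_mkord xpredT (fun j => F (blk lam j))); exact: sum_blk. Qed.

Section Main.
Variables (R : realType) (gT : finGroupType) (f : gT -> HH R).
Hypothesis emb : quat_embedding f.
Variables (K H : {group gT}) (gam : coset_of H).
Hypotheses (nHK : K \subset 'N(H)) (Kgam : K / H = <[gam]>).
Let m := #[gam].
Let E := E Kgam.
Variables (n : nat) (lam : seq nat).
Hypotheses (n0 : 0 < n) (lpos : all (fun l => 0 < l) lam) (hn : sumn lam = n).
Variables (alpha beta : gT).
Hypotheses (aK : alpha \in K) (bK : beta \in K).
Let d := foldr gcdn m lam.
Local Open Scope ring_scope.

Lemma dlV (a : gT) (i : 'I_n) : ( dl a^-1 i = (dl a i)^-1)%g.
Proof. by rewrite /dl; case: eqP; rewrite ?invg1. Qed.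

Lemma dlK (a : gT) (i : 'I_n) : a \in K -> dl a i \in K.
Proof. by rewrite /dl; case: eqP => // _ _; rewrite group1. Qed.

Lemma DD (a : gT) : D_ n (f a) *m D_ n (f a^-1%g) = 1%:M.
Proof.
rewrite !(D_mono emb) (monoG_mul emb) (one_monoG emb); apply: monoG_ext; last by rewrite mulg1.
by move=> i; rewrite perm1 dlV mulgV.
Qed.

Lemma DD' (a : gT) : D_ n (f a^-1%g) *m D_ n (f a) = 1%:M.
Proof. by rewrite -{2}(invgK a) DD. Qed.

Lemma sum_dl (F : gT -> nat) (a : gT) : F 1%g = 0%N -> (\sum_(i < n) F (dl a i))%N = F a.
Proof.
move=> F1; case: n n0 => // n' _.
rewrite big_ord_recl big1 => [|i _]; first by rewrite addn0.
by rewrite /dl /= F1.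
Qed.

Lemma P_form a A : P_lam f lam a A -> exists rho, A = D_ n (f a) *m Mperm R rho *m D_ n (f a^-1%g).
Proof.
case=> s [_ ->]; exists (\prod_(i < size lam) s i)%g.
rewrite telescope; [|exact: DD|exact: DD']. by rewrite permmx_big.
Qed.

Lemma P_tperm a (i0 : 'I_(size lam)) (j j' : 'I_n) :
  in_block lam i0 j -> in_block lam i0 j' ->
  P_lam f lam a (D_ n (f a) *m Mperm R (tperm j j') *m D_ n (f a^-1%g)).
Proof.
move=> hj hj'.
exists (fun i => if i == i0 then tperm j j' else 1%g); split.
  move=> i; apply/forallP => l; apply/implyP => hl.
  have [hi|hi] := eqVneq i i0; last by rewrite perm1.
  rewrite hi in hl; rewrite /= tpermD //; apply: contraNneq hl => <- //.
rewrite telescope; [|exact: DD|exact: DD']. by rewrite permmx_big prod_one.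
Qed.

Lemma only_if : conjugate_in (G_n f K H (n:=n)) (P_lam f lam alpha) (P_lam f lam beta) ->
  (d %| E beta + E alpha^-1%g)%N.
Proof.
case=> g [gi [Gg ggi gig hP]].
have [k [tau [kK km gE]]] := G_Gm emb nHK Kgam Gg.
subst g.
pose k' := fun i => ((k (tau^-1 i))^-1)%g.
have h1 : monoG f k tau *m monoG f k' tau^-1 = 1%:M.
  rewrite (monoG_mul emb) (one_monoG emb); apply: monoG_ext; last by rewrite mulgV.
  by move=> i; rewrite /k' permK mulgV.
have giE : gi = monoG f k' tau^-1 by rewrite -[gi]mulmx1 -h1 mulmxA gig mul1mx.
pose w := fun i => ((dl beta i)^-1 * k i * dl alpha (tau i))%g.
have hw : forall i0 (j j' : 'I_n), in_block lam i0 j -> in_block lam i0 j' ->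
    w ((tau^-1)%g j) = w ((tau^-1)%g j').
  move=> i0 j j' hj hj'.
  have i0lt := in_block_lt hj.
  have hX := @P_tperm alpha (Ordinal i0lt) j j' hj hj'.
  have /P_form [rho hrho] : P_lam f lam beta (monoG f k tau *m
      (D_ n (f alpha) *m Mperm R (tperm j j') *m D_ n (f alpha^-1%g)) *m gi).
    by apply/hP; eexists; split; first exact: hX.
  rewrite giE !(D_mono emb) !(Mperm_monoG emb) !mulmxA !(monoG_mul emb) in hrho.
  have [hp hv] := monoG_inj emb hrho.
  have hr : (tau^-1)%g j' = rho ((tau^-1)%g j).
    by have := congr1 (fun p : 'S_n => p ((tau^-1)%g j)) hp; rewrite /= !permM !perm1 permKV tpermL.
  have := hv ((tau^-1)%g j); rewrite /= !permM !perm1 permKV tpermL -hr !dlV /k' => /grp1.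
  by rewrite /w !permKV.
have wK : forall i, w i \in K.
  by move=> i; rewrite /w !groupM ?groupV ?dlK.
have hsw : (d %| \sum_(i < n) E (w i))%N.
  rewrite -(sum_perm (fun i => E (w i)) tau^-1).
  by apply: block_sum => // i0 j j' hj hj'; rewrite (hw i0 j j' hj hj').
have hk : forall i, k i = (dl beta i * w i * (dl alpha (tau i))^-1)%g.
  by move=> i; rewrite /w !mulgA mulgV mul1g mulgK.
have ht : forall i, E (k i) = (E (dl beta i) + E (w i) + E ((dl alpha (tau i))^-1)%g)%N %[mod m].
  move=> i; rewrite hk E_mul ?groupM ?groupV ?dlK //.
  by rewrite -modnDml E_mul ?dlK // modnDml.
have cong : (\sum_(i < n) E (k i) = E beta + \sum_(i < n) E (w i) + E alpha^-1%g %[mod m])%N.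
  rewrite (sum_cong ht) !big_split /=.
  rewrite (sum_dl (F := E)); last exact: E1.
  rewrite (sum_perm (fun i => E ((dl alpha i)^-1)%g) tau).
  rewrite (sum_dl (F := fun x => E x^-1%g)) //= invg1; exact: E1.
have hdm : (d %| m)%N by apply: foldr_dvd_m.
have : (d %| E beta + \sum_(i < n) E (w i) + E alpha^-1%g)%N.
  by rewrite /dvdn -(modn_dvdm _ hdm) -cong (modn_dvdm _ hdm) -/(dvdn d _) (dvdn_trans hdm km).
by rewrite addnAC dvdn_addl.
Qed.

Lemma if_dir : (d %| E beta + E alpha^-1%g)%N ->
  conjugate_in (G_n f K H (n:=n)) (P_lam f lam alpha) (P_lam f lam beta).
Proof.
move=> hd.
set s := (E beta + E alpha^-1%g)%N.
have [e he] := rep (order_gt0 gam) lpos (dvdn_mulr m.-1 hd).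
have [g0 g0K hg0] : exists2 g0, g0 \in K & coset H g0 = gam.
  have : gam \in (K / H)%g by rewrite Kgam cycle_id.
  by case/morphimP => x _ xK ->; exists x.
pose c := fun j : 'I_n => (g0 ^+ e (blk lam j))%g.
pose kk := fun j => (dl beta j * c j * (dl alpha j)^-1)%g.
have kkK : forall j, kk j \in K.
  by move=> j; rewrite /kk !groupM ?groupV ?groupX ?dlK.
pose ki := fun j => ((kk j)^-1)%g.
have h1 : monoG f kk 1 *m monoG f ki 1 = 1%:M.
  rewrite (monoG_mul emb) (one_monoG emb); apply: monoG_ext; last by rewrite mulg1.
  by move=> i; rewrite /ki perm1 mulgV.
have h2 : monoG f ki 1 *m monoG f kk 1 = 1%:M.
  rewrite (monoG_mul emb) (one_monoG emb); apply: monoG_ext; last by rewrite mulg1.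
  by move=> i; rewrite /ki perm1 mulVg.
have fac : forall i0 (s0 : 'S_n), perm_in_block lam i0 s0 ->
   monoG f kk 1 *m (D_ n (f alpha) *m Mperm R s0 *m D_ n (f alpha^-1%g)) *m monoG f ki 1
   = D_ n (f beta) *m Mperm R s0 *m D_ n (f beta^-1%g).
  move=> i0 s0 hs0.
  rewrite !(D_mono emb) !(Mperm_monoG emb) !mulmxA !(monoG_mul emb).
  apply: monoG_ext; last by rewrite !mul1g !mulg1.
  move=> i; rewrite /= !permM !perm1 /ki /kk !dlV.
  have -> : c (s0 i) = c i by rewrite /c (blk_perm i hs0).
  exact: grp2.
exists (monoG f kk 1), (monoG f ki 1); split; [ | exact: h1 | exact: h2 | ].
- apply: gen_gen; left; exists kk; split => //; last by rewrite qdiag_monoG.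
  rewrite (prod_inH nHK Kgam kkK).
  have ht : forall j, E (kk j) = (E (dl beta j) + e (blk lam j) + E ((dl alpha j)^-1)%g)%N %[mod m].
    move=> j; rewrite /kk E_mul ?groupM ?groupV ?groupX ?dlK //.
    apply: modD_cong => //; rewrite E_mul ?groupX ?dlK //.
    by apply: modD_cong => //; apply: E_pow.
  rewrite /dvdn (sum_cong ht) !big_split /=.
  rewrite (sum_dl (F := E)); last exact: E1.
  rewrite (sum_dl (F := fun x => E x^-1%g)) /=; last by rewrite invg1; exact: E1.
  rewrite (sum_blk_ord e hn).
  apply/eqP; rewrite addnAC -modnDmr he modnDmr.
  have hs : (E beta + E alpha^-1%g + s * m.-1 = s * m)%N.
    by rewrite /s addnC -mulnSr prednK ?order_gt0.
  by rewrite hs modnMl.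
- move=> A; split.
  + case=> sf [sb ->].
    exists (\big[mulmx/1%:M]_(i < size lam) (D_ n (f alpha) *m Mperm R (sf i) *m D_ n (f alpha^-1%g))).
    split; first by exists sf.
    rewrite -(telescope _ h1 h2); apply: eq_bigr => i _; exact: (esym (fac _ _ (sb i))).
  + case=> B [[sf [sb ->]] ->]; exists sf; split; first exact: sb.
    rewrite -(telescope _ h1 h2); apply: eq_bigr => i _; exact: (fac _ _ (sb i)).
Qed.
End Main.

End s8.
Import s8.


Unset Implicit Arguments.

Theorem proposition4p8 (R : realType) (gT : finGroupType) (f : gT -> HH R)
    (K H : {group gT}) (n : nat) (lam : seq nat) (alpha beta : gT) :
  quat_embedding f ->
  (3 <= n)%N ->
  ([~: K, K] \subset H)%g -> (H <| K)%g -> H != 1%g :> {set gT} ->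
  cyclic (K / H)%g ->
  is_partition n lam ->
  alpha \in K -> beta \in K ->
  let d := foldr gcdn #|K : H|%g lam in
  conjugate_in (G_n f K H (n:=n)) (P_lam f lam alpha) (P_lam f lam beta) <->
  (#[coset H (alpha * beta^-1)%g]%g %| #|K : H|%g %/ d)%N.
Proof.
move=> emb n3 _ nHK' _ /cyclicP [gam Kgam] [lpos _ hn] aK bK d.
have nHK : (K \subset 'N(H))%g by apply: normal_norm.
have n0 : (0 < n)%N by apply: leq_trans n3.
have hm : #|K : H|%g = #[gam]%g by rewrite -card_quotient // Kgam.
rewrite /d hm.
set m := #[gam]%g.
have hdm : (foldr gcdn m lam %| m)%N by apply: foldr_dvd_m.
set dd := foldr gcdn m lam in hdm *.
have eq1 : (#[coset H (alpha * beta^-1)%g]%g %| m %/ dd)%N =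
           (dd %| E Kgam beta + E Kgam alpha^-1%g)%N.
  have hN : forall x, x \in K -> x \in 'N(H)%g by move=> x; apply: (subsetP nHK).
  have -> : coset H (alpha * beta^-1)%g = ((coset H (beta * alpha^-1)%g)^-1)%g.
    by rewrite -morphV ?hN ?groupM ?groupV // invMg invgK.
  rewrite orderV morphM ?hN ?groupV //.
  rewrite -[coset_morphism H beta]/(coset H beta) -[coset_morphism H alpha^-1%g]/(coset H alpha^-1%g).
  rewrite (E_spec Kgam bK) (E_spec Kgam (groupVr aK)) -expgD.
  rewrite order_dvdn -expgM -order_dvdn.
  have q0 : (0 < m %/ dd)%N.
    by rewrite divn_gt0 ?(dvdn_leq (order_gt0 gam) hdm) // (dvdn_gt0 (order_gt0 gam) hdm).
  by rewrite -/m -{1}(divnK hdm) [X in (X %| _)]mulnC dvdn_pmul2r.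
rewrite eq1; split.
- exact: (only_if emb nHK Kgam n0 hn aK bK).
- exact: (if_dir emb nHK (Kgam:=Kgam) n0 lpos hn aK bK).
Qed.
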